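(* Let $\Sigma$ be an alphabet with $|\Sigma|\ge3$, $k\ge2$, and $f\colon(\Sigma^* )^k\to\Sigma^*$ RCP. Assume: ( * ) for every $i\in\{1,\ldots,k\}$ and every $u\in\Sigma^*$, the $(k-1)$-ary function $g_{i,u}(x_1,\ldots,x_{i-1},x_{i+1},\ldots,x_k)=f(x_1,\ldots,x_{i-1},u,x_{i+1},\ldots,x_k)$ satisfies exactly one of the conditions ($C_1$), ($C_2$), ($C_3$) below (as a $(k-1)$-ary function); ( ** ) there exist $y\in\Sigma^*\setminus\{\varepsilon\}$ and an index $i\in\{2,\ldots,k\}$ such that $f(y,x_2,\ldots,x_k)\in x_i\Sigma^*$ for all $(x_2,\ldots,x_k)\in(\Sigma^* )^{k-1}$. Then, for this index $i$, $f(z_1,z_2,\ldots,z_k)\in z_i\Sigma^*$ for all $(z_1,\ldots,z_k)\in(\Sigma^* )^k$.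
   Context: $\Sigma^*$ is the free monoid over $\Sigma$ (finite words, concatenation, empty word $\varepsilon$). For a word $w$, $w\Sigma^*$ denotes the set of words having $w$ as a prefix. A function $f\colon(\Sigma^* )^k\to\Sigma^*$ is RCP if for every monoid morphism $\varphi\colon\Sigma^*\to\Sigma^*$ and all $u_1,\ldots,u_k,v_1,\ldots,v_k$ with $\varphi(u_i)=\varphi(v_i)$ for all $i$, we have $\varphi(f(u_1,\ldots,u_k))=\varphi(f(v_1,\ldots,v_k))$. For an $m$-ary function $h\colon(\Sigma^* )^m\to\Sigma^*$ the conditions are: ($C_1$) there exists $b\in\Sigma$ with $h(x_1,\ldots,x_m)\in b\Sigma^*$ for all $x_1,\ldots,x_m\in\Sigma^*$; ($C_2$) there exists $j\in\{1,\ldots,m\}$ with $h(x_1,\ldots,x_m)\in x_j\Sigma^*$ for all $x_1,\ldots,x_m\in\Sigma^*$; ($C_3$) $h(x_1,\ldots,x_m)=\varepsilon$ for all $x_1,\ldots,x_m\in\Sigma^*$. *)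

(* Defs.v *)
From mathcomp Require Import all_boot.
Set Implicit Arguments. Unset Strict Implicit. Unset Printing Implicit Defensive.

(* Words over the alphabet T are sequences [seq T]; concatenation is [++],
   the empty word is [::]. An m-ary word function takes a finite function
   'I_m -> seq T (the argument tuple, 0-indexed). *)

Definition inPrefix (T : Type) (w s : seq T) : Prop := exists t, s = w ++ t.

Definition monoid_morph (T : Type) (phi : seq T -> seq T) : Prop :=
  phi [::] = [::] /\ forall u v, phi (u ++ v) = phi u ++ phi v.

Definition RCP (T : finType) (k : nat) (f : {ffun 'I_k -> seq T} -> seq T) : Prop :=
  forall phi : seq T -> seq T, monoid_morph phi ->
  forall u v : {ffun 'I_k -> seq T},
    (forall i, phi (u i) = phi (v i)) -> phi (f u) = phi (f v).

Definition C1 (T : finType) (m : nat) (h : {ffun 'I_m -> seq T} -> seq T) : Prop :=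
  exists b : T, forall x, inPrefix [:: b] (h x).
Definition C2 (T : finType) (m : nat) (h : {ffun 'I_m -> seq T} -> seq T) : Prop :=
  exists j : 'I_m, forall x : {ffun 'I_m -> seq T}, inPrefix (x j) (h x).
Definition C3 (T : finType) (m : nat) (h : {ffun 'I_m -> seq T} -> seq T) : Prop :=
  forall x, h x = [::].

Definition exactly_one (A B C : Prop) : Prop :=
  (A /\ ~ B /\ ~ C) \/ (~ A /\ B /\ ~ C) \/ (~ A /\ ~ B /\ C).

Definition ins (T : Type) (k : nat) (i : 'I_k) (u : seq T)
  (x : {ffun 'I_k.-1 -> seq T}) : {ffun 'I_k -> seq T} :=
  [ffun j => match unlift i j with Some j' => x j' | None => u end].

Definition fix_arg (T : finType) (k : nat) (f : {ffun 'I_k -> seq T} -> seq T)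
  (i : 'I_k) (u : seq T) : {ffun 'I_k.-1 -> seq T} -> seq T :=
  fun x => f (ins i u x).

(* Main.v *)
Require Import Defs.
From mathcomp Require Import all_boot.
Set Implicit Arguments. Unset Strict Implicit.

Lemma pre1_eq (T : Type) (a b : T) s : inPrefix [:: a] s -> inPrefix [:: b] s -> a = b.
Proof. by move=> [t ->] [t' /=] [->]. Qed.

Lemma pre1_nil (T : Type) (a : T) : ~ inPrefix [:: a] [::].
Proof. by move=> [t]. Qed.

Lemma pre_cons (T : Type) (a : T) w s : inPrefix (a :: w) s -> inPrefix [:: a] s.
Proof. by move=> [t ->]; exists (w ++ t). Qed.

Lemma two_avoid (T : finType) (hT : 3 <= #|T|) (a b : T) :
  exists d, d <> a /\ d <> b.
Proof.
case: (pickP [pred d | (d != a) && (d != b)]) => [d /= /andP[/eqP h1 /eqP h2]|h].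
  by exists d.
exfalso.
have : #|[set: T]| <= #|[set a; b]|.
  apply: subset_leq_card; apply/subsetP => x _.
  move: (h x) => /= /negbT; rewrite negb_and !negbK => /orP[]/eqP->;
  by rewrite !inE eqxx ?orbT.
rewrite cardsT cards2 => H; move: (leq_trans hT H); by case: (a != b).
Qed.

Lemma ins_drop (T : finType) (k : nat) (i : 'I_k) (z : {ffun 'I_k -> seq T}) :
  ins i (z i) [ffun j => z (lift i j)] = z.
Proof.
apply/ffunP => j; rewrite /ins ffunE.
by case: unliftP => [j' ->|->]; rewrite ?ffunE.
Qed.

Lemma cond_at (T : finType) (k : nat) (f : {ffun 'I_k -> seq T} -> seq T)
  (i : 'I_k) (u : seq T) :
  exactly_one (C1 (fix_arg f i u)) (C2 (fix_arg f i u)) (C3 (fix_arg f i u)) ->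
  (exists b, forall z : {ffun 'I_k -> seq T}, z i = u -> inPrefix [:: b] (f z)) \/
  (exists j : 'I_k.-1, forall z : {ffun 'I_k -> seq T}, z i = u -> inPrefix (z (lift i j)) (f z)) \/
  (forall z : {ffun 'I_k -> seq T}, z i = u -> f z = [::]).
Proof.
have H1 : C1 (fix_arg f i u) -> exists b, forall z : {ffun 'I_k -> seq T}, z i = u -> inPrefix [:: b] (f z).
  move=> [b hb]; exists b => z hz; move: (hb [ffun j => z (lift i j)]).
  by rewrite /fix_arg -hz ins_drop.
have H2 : C2 (fix_arg f i u) ->
   exists j : 'I_k.-1, forall z : {ffun 'I_k -> seq T}, z i = u -> inPrefix (z (lift i j)) (f z).
  move=> [j hj]; exists j => z hz; move: (hj [ffun j => z (lift i j)]).
  by rewrite /fix_arg -hz ins_drop ffunE.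
have H3 : C3 (fix_arg f i u) -> forall z : {ffun 'I_k -> seq T}, z i = u -> f z = [::].
  move=> h z hz; move: (h [ffun j => z (lift i j)]).
  by rewrite /fix_arg -hz ins_drop.
case=> [[a _]|[[_ [a _]]|[_ [_ a]]]]; [left|right;left|right;right]; auto.
Qed.

Theorem mainTheorem17 (T : finType) (k : nat) (f : {ffun 'I_k -> seq T} -> seq T)
  (hT : 3 <= #|T|) (hk : 2 <= k) (hf : RCP f)
  (hstar : forall (i : 'I_k) (u : seq T),
      exactly_one (C1 (fix_arg f i u)) (C2 (fix_arg f i u)) (C3 (fix_arg f i u)))
  (y : seq T) (hy : y <> [::]) (i : 'I_k) (hi : 0 < nat_of_ord i)
  (hstar2 : forall z : {ffun 'I_k -> seq T},
      (forall j : 'I_k, nat_of_ord j = 0 -> z j = y) -> inPrefix (z i) (f z)) :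
  forall z : {ffun 'I_k -> seq T}, inPrefix (z i) (f z).
Proof.
case: y hy hstar2 => [//|y0 ys] _ hstar2.
have hi0 : (i == 0 :> nat) = false by rewrite eqn0Ngt hi.
have F : forall d, d <> y0 -> forall z : {ffun 'I_k -> seq T}, z i = [:: d] -> inPrefix [:: d] (f z).
  move=> d hd.
  pose z1 : {ffun 'I_k -> seq T} :=
    [ffun j => if val j == 0 then y0 :: ys else if j == i then [:: d] else [::]].
  have hz1 : inPrefix [:: d] (f z1).
    have := hstar2 z1; rewrite ffunE hi0 eqxx; apply => j hj.
    by rewrite ffunE /= hj eqxx.
  have z1i : z1 i = [:: d] by rewrite ffunE hi0 eqxx.
  case: (@cond_at T k f i [:: d] (hstar i [:: d])) => [[b hb]|[[j hj]|h3]].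
  - have := hb _ z1i; move/(pre1_eq hz1) => e z hz; rewrite e; exact: hb.
  - exfalso.
    case hl: (val (lift i j) == 0).
      have := hj _ z1i; rewrite ffunE hl.
      move=> h; exact: hd (pre1_eq hz1 (pre_cons h)).
    have [e [he _]] := two_avoid hT d d.
    pose z2 : {ffun 'I_k -> seq T} :=
      [ffun j => if val j == 0 then y0 :: ys else if j == i then [:: d] else [:: e]].
    have z2i : z2 i = [:: d] by rewrite ffunE hi0 eqxx.
    have hz2 : inPrefix [:: d] (f z2).
      have := hstar2 z2; rewrite z2i; apply => j' hj'.
      by rewrite ffunE /= hj' eqxx.
    have := hj _ z2i; rewrite ffunE hl.
    have -> : (lift i j == i) = false by apply/negbTE; rewrite eq_sym neq_lift.
    move=> h; exact: he (esym (pre1_eq hz2 h)).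
  - by exfalso; have := h3 _ z1i; move: hz1 => /[swap] ->; apply: pre1_nil.
move=> z.
have k0 : 0 < k by apply: leq_trans hk.
pose p0 : 'I_k := Ordinal k0.
have p0i : (p0 == i) = false.
  by apply/negbTE; apply/eqP => /(congr1 val) /= /esym/eqP; rewrite hi0.
pose mk (d : T) (l : 'I_k) (e : T) : {ffun 'I_k -> seq T} :=
  [ffun j => if j == i then [:: d] else if j == l then [:: e] else z j].
have mki : forall d l e, mk d l e i = [:: d] by move=> d l e; rewrite ffunE eqxx.
have mkp0 : forall d l e, l != p0 -> mk d l e p0 = z p0.
  move=> d l e hl; rewrite ffunE p0i.
  by have -> : (p0 == l) = false by apply/negbTE; rewrite eq_sym.
case: (@cond_at T k f p0 (z p0) (hstar p0 (z p0))) => [[b hb]|[[j hj]|h3]].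
- exfalso.
  have [d [hd1 hd2]] := two_avoid hT b y0.
  have h1 := F d hd2 _ (mki d i d).
  have h2 := hb (mk d i d) (mkp0 d i d (negbT (etrans (eq_sym i p0) p0i))).
  exact: hd1 (pre1_eq h1 h2).
- case hl: (lift p0 j == i); first by move/eqP: hl => <-; apply: hj.
  exfalso.
  have [d [hd1 _]] := two_avoid hT y0 y0.
  have [e [he _]] := two_avoid hT d d.
  have hlp : lift p0 j != p0 by rewrite eq_sym neq_lift.
  have h1 := F d hd1 _ (mki d (lift p0 j) e).
  have := hj (mk d (lift p0 j) e) (mkp0 _ _ _ hlp).
  rewrite ffunE hl eqxx => h2.
  exact: he (esym (pre1_eq h1 h2)).
- exfalso.
  have [d [hd1 _]] := two_avoid hT y0 y0.
  have h1 := F d hd1 _ (mki d i d).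
  have h4 := h3 _ (mkp0 d i d (negbT (etrans (eq_sym i p0) p0i))).
  rewrite h4 in h1; case: h1 => t; discriminate.
Qed.
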